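(* Let $G$ be a countable group and $\mu$ a symmetric probability measure on $G$ (i.e. $\mu(g)=\mu(g^{-1})$ for all $g$) whose support generates $G$ as a group. Let $(X_1,X_2,\ldots)$ be a $\mu$-random walk on $G$ and, for $n\ge 1$, let $\mathcal{S}_n$ be the semigroup generated by $\{X_n,X_{n+1},\ldots\}$. Fix $n\ge 1$. If almost surely $X_i^{-1}\in\mathcal{S}_n$ for all $i\ge n$, then $\mathcal{S}_n=G$ almost surely.
   Context: A $\mu$-random walk on $G$ is defined by taking $\zeta_1,\zeta_2,\ldots$ i.i.d. with law $\mu$ and setting $X_n=\zeta_1\zeta_2\cdots\zeta_n$. *)

(* Defs.v *)
From HB Require Import structures.
From mathcomp Require Import all_boot all_order all_algebra monoid.
From mathcomp Require Import all_classical all_reals all_analysis.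
Set Implicit Arguments. Unset Strict Implicit. Unset Printing Implicit Defensive.
Import Order.TTheory GRing.Theory Num.Theory.
Local Open Scope classical_set_scope.
Local Open Scope ring_scope.

Section Defs.
Variable G : groupType.

Inductive sgen (A : set G) : set G :=
  | sgen_base x : A x -> sgen A x
  | sgen_mul x y : sgen A x -> sgen A y -> sgen A (monoid.mul x y).

Inductive ggen (A : set G) : set G :=
  | ggen_base x : A x -> ggen A x
  | ggen_one : ggen A monoid.one
  | ggen_inv x : ggen A x -> ggen A (monoid.inv x)
  | ggen_mul x y : ggen A x -> ggen A y -> ggen A (monoid.mul x y).

Variable R : realType.

Definition is_prob_fun (mu : G -> R) : Prop :=
  (forall g, 0 <= mu g) /\ (\esum_(g in [set: G]) (mu g)%:E = 1)%E.

Definition mu_support (mu : G -> R) : set G := [set g | mu g != 0].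

Definition symmetric_fun (mu : G -> R) : Prop := forall g, mu g = mu (monoid.inv g).

Fixpoint rwalk (T : Type) (zeta : nat -> T -> G) (n : nat) (w : T) : G :=
  match n with
  | 0 => monoid.one
  | m.+1 => monoid.mul (rwalk zeta m w) (zeta m.+1 w)
  end.

(* zeta_1, zeta_2, ... are i.i.d. with law mu (G discrete): the events
   {zeta_i = g} are measurable and, for every k and g_1..g_k,
   P(zeta_1 = g_1, ..., zeta_k = g_k) = mu(g_1) ... mu(g_k). *)
Definition iid_law d (T : measurableType d) (P : probability T R)
    (zeta : nat -> T -> G) (mu : G -> R) : Prop :=
  (forall i g, measurable [set w | zeta i w = g]) /\
  (forall (k : nat) (g : nat -> G),
     P [set w | forall i, (1 <= i <= k)%N -> zeta i w = g i]
       = (\prod_(1 <= i < k.+1) mu (g i))%:E).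

Definition Sgen_tail (T : Type) (zeta : nat -> T -> G) (n : nat) (w : T) : set G :=
  sgen [set x | exists i, (n <= i)%N /\ x = rwalk zeta i w].

End Defs.

(* Main.v *)
Require Import Defs.
From HB Require Import structures.
From mathcomp Require Import all_boot all_order all_algebra monoid.
From mathcomp Require Import all_classical all_reals all_analysis.
Import Order.TTheory GRing.Theory Num.Theory.
Local Open Scope classical_set_scope.
Local Open Scope ring_scope.
Set Implicit Arguments. Unset Strict Implicit. Unset Printing Implicit Defensive.
Lemma sgen_inv (G : groupType) (A : set G) :
  (forall x, A x -> sgen A (monoid.inv x)) ->
  forall x, sgen A x -> sgen A (monoid.inv x).
Proof.
move=> HA x; elim=> [y Ay|y z _ Hy _ Hz]; first exact: HA.
rewrite invgM; exact: sgen_mul.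
Qed.

Lemma alg_part (G : groupType) (mu : G -> nat) (zeta : nat -> unit -> G) : True.
Proof. by []. Qed.
Lemma group_part (G : groupType) (T : Type) (zeta : nat -> T -> G) (S : set G) n w :
  (forall i, (n <= i)%N -> Sgen_tail zeta n w (monoid.inv (rwalk zeta i w))) ->
  (forall g, S g -> exists i, (n < i)%N /\ zeta i w = g) ->
  (forall g, ggen S g) ->
  Sgen_tail zeta n w = setT.
Proof.
move=> Hinv HS Hgen.
set A := [set x | exists i, (n <= i)%N /\ x = rwalk zeta i w].
have HI : forall x, sgen A x -> sgen A (monoid.inv x).
  apply: sgen_inv => x [i [ni ->]]; exact: Hinv.
have HX : forall i, (n <= i)%N -> sgen A (rwalk zeta i w).
  by move=> i ni; apply: sgen_base; exists i.
have H1 : sgen A monoid.one.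
  rewrite -(mulgV (rwalk zeta n w)); apply: sgen_mul; first exact: HX.
  by apply: Hinv.
have Hz : forall i, (n < i)%N -> sgen A (zeta i w).
  case=> // i ni.
  have -> : zeta i.+1 w = monoid.mul (monoid.inv (rwalk zeta i w)) (rwalk zeta i.+1 w).
    by rewrite /= mulgA mulVg mul1g.
  by apply: sgen_mul; [apply: Hinv | apply: HX]; rewrite // ltnW.
apply/seteqP; split=> // g _.
elim: (Hgen g) => [x Sx|//|x _ Hx|x y _ Hx _ Hy].
- by have [i [ni <-]] := HS x Sx; exact: Hz.
- exact: HI.
- exact: sgen_mul.
Qed.
Definition ev (G : groupType) (f : G -> nat) (m : nat) : G :=
  xget monoid.one [set x | f x = m].
Definition qm (G : groupType) (f : G -> nat) (m : nat) : bool :=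
  `[< exists x, f x = m >].
Definition mu' (R : realType) (G : groupType) (mu : G -> R) (f : G -> nat) (m : nat) : R :=
  if qm f m then mu (ev f m) else 0.

Lemma ev_f (G : groupType) (f : G -> nat) x : injective f -> ev f (f x) = x.
Proof. by move=> fi; apply: xget_unique => // y /fi. Qed.

Lemma qm_f (G : groupType) (f : G -> nat) x : qm f (f x).
Proof. by apply/asboolP; exists x. Qed.

Lemma qmP (G : groupType) (f : G -> nat) m : qm f m -> f (ev f m) = m.
Proof. by move=> /asboolP h; have := xgetPex monoid.one h. Qed.

Lemma mu'_f (R : realType) (G : groupType) (mu : G -> R) (f : G -> nat) x :
  injective f -> mu' mu f (f x) = mu x.
Proof. by move=> fi; rewrite /mu' qm_f ev_f. Qed.

Lemma mu'_ge0 (R : realType) (G : groupType) (mu : G -> R) (f : G -> nat) m :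
  (forall g, 0 <= mu g) -> 0 <= mu' mu f m.
Proof. by move=> h; rewrite /mu'; case: ifP. Qed.

Lemma mu'_total (R : realType) (G : groupType) (mu : G -> R) (f : G -> nat) :
  injective f -> is_prob_fun mu ->
  (\sum_(m <oo) (mu' mu f m)%:E = 1)%E.
Proof.
move=> fi [mu0 mu1].
rewrite nneseries_esumT; last by move=> m; rewrite lee_fin mu'_ge0.
rewrite -mu1.
have -> : (\esum_(i in [set: nat]) (mu' mu f i)%:E =
   \esum_(m in range f) (mu (ev f m))%:E)%E.
  rewrite [RHS]esum_mkcond; apply: eq_esum => m _.
  rewrite /mu'; case: ifPn => [/asboolP [x <-]|/asboolP nq].
    by rewrite ifT // inE; exists x.
  by rewrite ifF //; apply/negbTE; rewrite notin_setE => -[x _ fx]; apply: nq; exists x.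
rewrite (esum_image setT f (fun m => (mu (ev f m))%:E)); last by move=> x y _ _ /fi.
by apply: eq_esum => x _; rewrite ev_f.
Qed.
Lemma meas_eta d (T : measurableType d) (G : groupType) (zeta : nat -> T -> G)
  (f : G -> nat) : injective f -> (forall i g, measurable [set w | zeta i w = g]) ->
  forall i (S : pred nat), measurable [set w | S (f (zeta i w))].
Proof.
move=> fi mz i S.
have -> : [set w | S (f (zeta i w))] =
   \bigcup_(m in [set m | S m]) [set w | f (zeta i w) = m].
  apply/seteqP; split=> [w Sw|w [m Sm /= H]]; [by exists (f (zeta i w)) | by rewrite /= H].
apply: bigcup_measurable => m _.
case: (boolP (qm f m)) => [qmm|/asboolP nq].
  have -> : [set w | f (zeta i w) = m] = [set w | zeta i w = ev f m].
    apply/seteqP; split=> w /= H.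
      by rewrite -H ev_f.
    by rewrite H qmP.
  exact: mz.
have -> : [set w | f (zeta i w) = m] = set0.
  by apply/seteqP; split=> // w /= fw; apply: nq; exists (zeta i w).
exact: measurable0.
Qed.

Definition cnd (G : groupType) (T : Type) (zeta : nat -> T -> G) (f : G -> nat)
  (j : nat) (B : nat -> pred nat) (h : nat -> nat) (i : nat) : set T :=
  if (i <= j)%N then [set w | B i (f (zeta i w))] else [set w | f (zeta i w) = h i].

Fixpoint cyl (G : groupType) (T : Type) (zeta : nat -> T -> G) (f : G -> nat)
  (j : nat) (B : nat -> pred nat) (h : nat -> nat) (k : nat) : set T :=
  match k with 0 => setT | k'.+1 => cyl zeta f j B h k' `&` cnd zeta f j B h k'.+1 end.

Lemma cylE (G : groupType) (T : Type) (zeta : nat -> T -> G) (f : G -> nat) j B h k w :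
  cyl zeta f j B h k w <-> (forall i, (0 < i <= k)%N -> cnd zeta f j B h i w).
Proof.
elim: k => [|k IH] /=; first by split=> // _ [].
split=> [[/IH H1 H2] i /andP[i0]|H].
  rewrite leq_eqVlt => /orP[/eqP -> //|ik]; apply: H1; by rewrite i0.
change (cyl zeta f j B h k w /\ cnd zeta f j B h k.+1 w).
split; last by apply: H; rewrite leqnn.
by apply/IH => i /andP[i0 ik]; apply: H; rewrite i0 ltnW.
Qed.

Lemma cyl_meas d (T : measurableType d) (G : groupType) (zeta : nat -> T -> G)
  (f : G -> nat) j B h k : injective f ->
  (forall i g, measurable [set w | zeta i w = g]) ->
  measurable (cyl zeta f j B h k).
Proof.
move=> fi mz; elim: k => [|k IH] /=; first exact: measurableT.
apply: measurableI => //; rewrite /cnd; case: ifP => _.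
  exact: (meas_eta fi mz k.+1 (B k.+1)).
have -> : [set w | f (zeta k.+1 w) = h k.+1] = [set w | pred1 (h k.+1) (f (zeta k.+1 w))].
  by apply/seteqP; split=> w /= /eqP.
exact: (meas_eta fi mz k.+1 (pred1 (h k.+1))).
Qed.
Definition sB (R : realType) (G : groupType) (mu : G -> R) (f : G -> nat) (S : pred nat) : R :=
  fine (\sum_(m <oo | S m) (mu' mu f m)%:E).

Lemma sB_le1 (R : realType) (G : groupType) (mu : G -> R) (f : G -> nat) (S : pred nat) :
  injective f -> is_prob_fun mu ->
  (\sum_(m <oo | S m) (mu' mu f m)%:E <= 1)%E.
Proof.
move=> fi hmu; rewrite -(mu'_total fi hmu) eseries_mkcond.
apply: lee_nneseries => [i _ _|i _]; first by case: ifP => //; rewrite lee_fin mu'_ge0 //; case: hmu.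
by case: ifP => // _; rewrite lee_fin mu'_ge0 //; case: hmu.
Qed.

Lemma sBE (R : realType) (G : groupType) (mu : G -> R) (f : G -> nat) (S : pred nat) :
  injective f -> is_prob_fun mu ->
  (sB mu f S)%:E = (\sum_(m <oo | S m) (mu' mu f m)%:E)%E.
Proof.
move=> fi hmu; rewrite /sB fineK // ge0_fin_numE.
  by rewrite (le_lt_trans (sB_le1 S fi hmu)) // ltry.
by apply: nneseries_ge0 => i _ _; rewrite lee_fin mu'_ge0 //; case: hmu.
Qed.

Lemma sB_ge0 (R : realType) (G : groupType) (mu : G -> R) (f : G -> nat) (S : pred nat) :
  injective f -> is_prob_fun mu -> 0 <= sB mu f S.
Proof.
move=> fi hmu; rewrite -lee_fin sBE //.
by apply: nneseries_ge0 => i _ _; rewrite lee_fin mu'_ge0 //; case: hmu.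
Qed.

Definition weight (R : realType) (G : groupType) (mu : G -> R) (f : G -> nat)
  (j : nat) (B : nat -> pred nat) (h : nat -> nat) (k : nat) : R :=
  \prod_(1 <= i < k.+1) (if (i <= j)%N then sB mu f (B i) else mu' mu f (h i)).

Lemma weight_ge0 (R : realType) (G : groupType) (mu : G -> R) (f : G -> nat) j B h k :
  injective f -> is_prob_fun mu -> 0 <= weight mu f j B h k.
Proof.
move=> fi hmu; apply: prodr_ge0 => i _; case: ifP => _; first exact: sB_ge0.
by apply: mu'_ge0; case: hmu.
Qed.

Lemma cyl_base (R : realType) (G : groupType) d (T : measurableType d)
  (P : probability T R) (mu : G -> R) (zeta : nat -> T -> G) (f : G -> nat) B h k :
  injective f -> is_prob_fun mu -> iid_law P zeta mu ->
  (P (cyl zeta f 0 B h k) <= (weight mu f 0 B h k)%:E)%E.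
Proof.
move=> fi hmu [mz hiid].
have [allq|nallq] := pselect (forall i, (0 < i <= k)%N -> qm f (h i)).
  have -> : cyl zeta f 0 B h k =
      [set w | forall i, (1 <= i <= k)%N -> zeta i w = ev f (h i)].
    apply/seteqP; split=> w.
      move=> /cylE H i ik; have := H i ik; rewrite /cnd /=.
      case: i ik => // i ik /= <-; by rewrite ev_f.
    move=> /= H; apply/cylE => i ik; rewrite /cnd.
    case: i ik => // i ik /=; by rewrite H // qmP // allq.
  rewrite hiid /weight lee_fin le_eqVlt; apply/orP; left; apply/eqP.
  apply: eq_big_nat => i ik; case: i ik => // i ik /=.
  by rewrite /mu' allq.
have -> : cyl zeta f 0 B h k = set0.
  apply/seteqP; split=> // w /cylE H; apply: nallq => i ik.
  have := H i ik; rewrite /cnd; case: i ik => // i ik /= <-; exact: qm_f.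
by rewrite measure0 lee_fin weight_ge0.
Qed.
Lemma cyl_ineq (R : realType) (G : groupType) d (T : measurableType d)
  (P : probability T R) (mu : G -> R) (zeta : nat -> T -> G) (f : G -> nat) :
  injective f -> is_prob_fun mu -> iid_law P zeta mu ->
  forall j B h k, (P (cyl zeta f j B h k) <= (weight mu f j B h k)%:E)%E.
Proof.
move=> fi hmu hiid; have mz := hiid.1.
have mu0 : forall g, 0 <= mu g by case: hmu.
elim=> [|j IH] B h k; first exact: cyl_base.
have [kj|jk] := leqP k j.
  have -> : cyl zeta f j.+1 B h k = cyl zeta f j B h k.
    apply/seteqP; split=> w /cylE H; apply/cylE => i ik; have := H i ik;
    rewrite /cnd; case/andP: ik => _ ik;
    have ij : (i <= j)%N := leq_trans (ik : (i <= k)%N) kj; by rewrite ij (leqW ij).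
  have -> : weight mu f j.+1 B h k = weight mu f j B h k.
    apply: eq_big_nat => i /andP[_ ik].
    have ij : (i <= j)%N := leq_trans (ik : (i <= k)%N) kj; by rewrite ij (leqW ij).
  exact: IH.
pose hm m := fun i => if i == j.+1 then m else h i.
pose F m := if B j.+1 m then cyl zeta f j B (hm m) k else set0.
have mF : forall m, measurable (F m).
  by move=> m; rewrite /F; case: ifP => _; [exact: cyl_meas | exact: measurable0].
have sub : cyl zeta f j.+1 B h k `<=` \bigcup_m F m.
  move=> w /cylE H; exists (f (zeta j.+1 w)) => //.
  have Hj : cnd zeta f j.+1 B h j.+1 w by apply: H; rewrite /= jk.
  rewrite /cnd leqnn /= in Hj; rewrite /F Hj; apply/cylE => i ik.
  have := H i ik; rewrite /cnd /hm.
  case: (ltngtP i j.+1) => [ij|ji|->].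
  - by rewrite -ltnS ij.
  - by rewrite leqNgt (ltnW ji).
  - by rewrite ltnn.
set W := \prod_(i <- index_iota 1 k.+1 | i != j.+1)
   (if (i <= j)%N then sB mu f (B i) else mu' mu f (h i)).
have jin : j.+1 \in index_iota 1 k.+1 by rewrite mem_index_iota /= ltnS.
have uq : uniq (index_iota 1 k.+1) by apply: iota_uniq.
have Wm : forall m, weight mu f j B (hm m) k = mu' mu f m * W.
  move=> m; rewrite /weight (bigD1_seq _ jin uq) /= ltnn /hm eqxx; congr (_ * _).
  by apply: eq_bigr => i /negbTE ->.
have Wj : weight mu f j.+1 B h k = sB mu f (B j.+1) * W.
  rewrite /weight (bigD1_seq _ jin uq) /= leqnn; congr (_ * _).
  apply: eq_bigr => i ij; by rewrite leq_eqVlt (negbTE ij) /= ltnS.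
have W0 : 0 <= W.
  apply: prodr_ge0 => i _; case: ifP => _; [exact: sB_ge0 | exact: mu'_ge0].
have mC : measurable (cyl zeta f j.+1 B h k) by exact: cyl_meas.
apply: le_trans (@measure_sigma_subadditive _ _ _ P (cyl zeta f j.+1 B h k) F mF mC sub) _.
apply: le_trans (_ : (\sum_(m <oo) (if B j.+1 m then (mu' mu f m * W)%:E else 0%E) <= _)%E).
  apply: lee_nneseries => [m _ _|m _]; first exact: measure_ge0.
  rewrite /F; case: ifP => _; last by rewrite measure0.
  by rewrite -Wm; exact: IH.
rewrite -eseries_mkcond Wj mulrC EFinM sBE //.
rewrite -nneseriesZl; last by move=> i _; rewrite lee_fin mu'_ge0.
apply: lee_nneseries => [i _ _|i _]; first by rewrite lee_fin mulr_ge0 ?mu'_ge0.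
by rewrite -EFinM mulrC.
Qed.
Lemma sB_T (R : realType) (G : groupType) (mu : G -> R) (f : G -> nat) :
  injective f -> is_prob_fun mu -> sB mu f xpredT = 1.
Proof. by move=> fi hmu; apply: EFin_inj; rewrite sBE // mu'_total. Qed.

Lemma sB_neq (R : realType) (G : groupType) (mu : G -> R) (f : G -> nat) g :
  injective f -> is_prob_fun mu -> sB mu f (fun m => m != f g) = 1 - mu g.
Proof.
move=> fi hmu; apply: EFin_inj; rewrite sBE // EFinB.
have := mu'_total fi hmu.
rewrite (@nneseriesD1 _ _ (f g) xpredT) //; last by move=> k _; rewrite lee_fin mu'_ge0 //; case: hmu.
rewrite mu'_f // => <-.
by rewrite [X in (X - _)%E]addeC addeK.
Qed.
Lemma Eg_null (R : realType) (G : groupType) d (T : measurableType d)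
  (P : probability T R) (mu : G -> R) (zeta : nat -> T -> G) (f : G -> nat) n g :
  injective f -> is_prob_fun mu -> iid_law P zeta mu -> mu g != 0 ->
  measurable [set w | forall i, (n < i)%N -> zeta i w != g] /\
  P [set w | forall i, (n < i)%N -> zeta i w != g] = 0%E.
Proof.
move=> fi hmu hiid mug; have mz := hiid.1.
set E := [set w | _].
have mE : measurable E.
  have -> : E = \bigcap_i (if (n < i)%N then ~` [set w | zeta i w = g] else setT).
    apply/seteqP; split=> [w H i _|w H i ni].
      by case: ifP => // ni; move=> /= e; move: (H i ni); rewrite e eqxx.
    by have := H i I; rewrite ni /= => ne; apply/eqP.
  by apply: bigcapT_measurable => i; case: ifP => _; [apply: measurableC|].
split=> //.
pose B := fun i => if (n < i)%N then (fun m : nat => m != f g) else xpredT.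
pose c := 1 - mu g.
have prodE : forall m, \prod_(1 <= i < (n + m).+1) sB mu f (B i) = c ^+ m.
  elim=> [|m IH].
    rewrite addn0 expr0; apply: big1_seq => i /andP[_]; rewrite mem_index_iota => /andP[_ ik].
    have ik' : (i <= n)%N := ik.
    by rewrite /B ltnNge ik' /= sB_T.
  rewrite addnS big_nat_recr //= IH exprSr /B ltnS leq_addr /c sB_neq //.
have bound : forall m, (P E <= (c ^+ m)%:E)%E.
  move=> m; pose k := (n + m)%N.
  have sub : E `<=` cyl zeta f k B (fun _ => 0%N) k.
    move=> w Ew; apply/cylE => i /andP[_ ik]; rewrite /cnd ik /B.
    case: ifP => ni //=; apply/negP => /eqP/fi; apply/eqP; exact: Ew.
  have mC : measurable (cyl zeta f k B (fun _ => 0%N) k) by exact: cyl_meas.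
  apply: (le_trans (@le_measure _ _ _ P E _ (mem_set mE) (mem_set mC) sub)).
  apply: (le_trans (@cyl_ineq _ _ _ _ P mu zeta f fi hmu hiid k B (fun _ => 0%N) k)).
  rewrite lee_fin le_eqVlt; apply/orP; left; apply/eqP.
  rewrite /weight (eq_big_nat _ _ (F2 := fun i => sB mu f (B i))); last first.
    by move=> i /andP[_ ik]; have ik' : (i <= k)%N := ik; rewrite ik'.
  exact: prodE.
have [c0 c1] : 0 <= c /\ c < 1.
  split; first by rewrite /c -(sB_neq g fi hmu) sB_ge0.
  rewrite /c ltrBlDr ltrDl lt0r mug /=; by case: hmu.
apply/eqP; rewrite eq_le measure_ge0 andbT; apply/negPn/negP; rewrite -ltNge => PE.
have fP : P E \is a fin_num.
  by rewrite ge0_fin_numE ?measure_ge0 // (le_lt_trans (probability_le1 P mE)) // ltry.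
have r0 : 0 < fine (P E) by rewrite -lte_fin fineK.
have cabs : `|c| < 1 by rewrite ger0_norm.
have := cvgr0_norm_lt _ (cvg_expr cabs) _ r0.
move=> [N _ /(_ N (leqnn N))] /= HN.
have := bound N; rewrite -(fineK fP) lee_fin => HB.
have := lt_le_trans (le_lt_trans HB (le_lt_trans (ler_norm _) HN)) (lexx _).
by rewrite ltxx.
Qed.
Unset Implicit Arguments.

Theorem lemma1 (R : realType) (G : groupType) (d : measure_display)
    (T : measurableType d) (P : probability T R) (mu : G -> R)
    (zeta : nat -> T -> G) (n : nat) :
  countable [set: G] ->
  is_prob_fun mu ->
  symmetric_fun mu ->
  (forall g : G, ggen (mu_support mu) g) ->
  iid_law P zeta mu ->
  (1 <= n)%N ->
  {ae P, forall w, forall i, (n <= i)%N -> Sgen_tail zeta n w (monoid.inv (rwalk zeta i w))} ->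
  {ae P, forall w, Sgen_tail zeta n w = [set: G]}.
Proof.
move=> /countable_injP [f finj'] hmu _ hgen hiid _ hyp.
have fi : injective f by move=> x y; apply: finj'; rewrite inE.
pose Eg g := [set w | forall i, (n < i)%N -> zeta i w != g].
pose Bad m := if qm f m && (mu (ev f m) != 0) then Eg (ev f m) else set0.
have nB : P.-negligible (\bigcup_m Bad m).
  apply: negligible_bigcup => m; rewrite /Bad; case: ifP => [/andP[_ mu0]|_].
    have [mE E0] := @Eg_null _ _ _ _ P mu zeta f n (ev f m) fi hmu hiid mu0.
    by exists (Eg (ev f m)); split.
  exact: negligible_set0.
have hyp' : P.-negligible (~` [set w | forall i, (n <= i)%N ->
   Sgen_tail zeta n w (monoid.inv (rwalk zeta i w))]) := hyp.
apply: (negligibleS _ (negligibleU hyp' nB)) => w /= Hw.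
apply: contrapT => Hn; apply: Hw.
have [H1 H2] : (forall i, (n <= i)%N -> Sgen_tail zeta n w (monoid.inv (rwalk zeta i w)))
   /\ (forall m, ~ Bad m w).
  split; first by apply: contrapT => H; apply: Hn; left.
  by move=> m Bm; apply: Hn; right; exists m.
apply: (group_part (S := mu_support mu)) => // g mug.
apply: contrapT => nex; apply: (H2 (f g)).
rewrite /Bad qm_f ev_f //= mug /Eg /= => i ni.
by apply/eqP => e; apply: nex; exists i.
Qed.
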